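(* Let $B$ be a commutative ring, let $x,y\in B$ with $Bx+By=B$, let $\alpha\subset B$ be an ideal, and let $\nu_1,\ldots,\nu_p\subset B$ be prime ideals. Suppose that for every $a\in\alpha$ there exists $c_0$ (depending on $a$) such that $x+ay^c\in\bigcup_{i=1}^p\nu_i$ for all $c\ge c_0$. Then $Bx+\alpha\subset\nu_i$ for some $i$. *)

(* Defs.v *)
From mathcomp Require Import all_boot all_algebra.
Set Implicit Arguments. Unset Strict Implicit. Unset Printing Implicit Defensive.
Import GRing.Theory.
Local Open Scope ring_scope.

Definition is_ideal (B : comPzRingType) (I : B -> Prop) : Prop :=
  [/\ I 0, (forall a b, I a -> I b -> I (a + b)) & (forall r a, I a -> I (r * a))].

Definition is_prime_ideal (B : comPzRingType) (I : B -> Prop) : Prop :=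
  [/\ is_ideal I, ~ I 1 & (forall a b, I (a * b) -> I a \/ I b)].

(* Main.v *)
Require Import Defs.
From mathcomp Require Import all_boot all_algebra.
From Stdlib Require Import Classical ClassicalEpsilon.
Set Implicit Arguments. Unset Strict Implicit. Unset Printing Implicit Defensive.
Import GRing.Theory.
Local Open Scope ring_scope.

Section Aux.
Variable B : comPzRingType.

Lemma id_mull (I : B -> Prop) r a : is_ideal I -> I a -> I (r * a).
Proof. by case=> _ _ H; apply: H. Qed.

Lemma id_mulr (I : B -> Prop) r a : is_ideal I -> I a -> I (a * r).
Proof. by move=> HI Ha; rewrite mulrC; apply: id_mull. Qed.

Lemma id_add (I : B -> Prop) a b : is_ideal I -> I a -> I b -> I (a + b).
Proof. by case=> _ H _; apply: H. Qed.

Lemma id_sub (I : B -> Prop) a b : is_ideal I -> I a -> I b -> I (a - b).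
Proof.
move=> HI Ha Hb; apply: id_add => //.
by rewrite -mulN1r; apply: id_mull.
Qed.

Lemma pr_mul (P : B -> Prop) a b : is_prime_ideal P -> ~ P a -> ~ P b -> ~ P (a * b).
Proof. by case=> _ _ H Ha Hb /H [] . Qed.

Lemma pr_pow (P : B -> Prop) y c : is_prime_ideal P -> P (y ^+ c) -> P y.
Proof.
move=> HP; elim: c => [|c IH]; first by rewrite expr0; case: HP => _ H1 _ /H1.
rewrite exprS; case: (HP) => _ _ H /H [] //.
Qed.

Lemma PA (I : eqType) (P : I -> B -> Prop) (J : B -> Prop) : is_ideal J ->
  forall n (s : seq I), (size s <= n)%N -> uniq s ->
  (forall i, i \in s -> is_prime_ideal (P i) /\ exists a, J a /\ ~ P i a) ->
  exists a, J a /\ forall i, i \in s -> ~ P i a.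
Proof.
move=> HJ; elim=> [|n IH] s.
  rewrite leqn0 => /nilP -> _ _; exists 0; split; first by case: HJ.
  by [].
move=> Hsz Hu Hs.
case: (classic (exists a, J a /\ forall i, i \in s -> ~ P i a)) => // Hno.
have G : forall i, i \in s -> exists a, [/\ J a, P i a &
           forall j, j \in s -> j != i -> ~ P j a].
  move=> i Hi.
  have [|||a [Ja Ha]] := IH (rem i s).
  - by rewrite size_rem //; case: (size s) Hsz.
  - exact: rem_uniq.
  - by move=> j /mem_rem; apply: Hs.
  have Hj : forall j, j \in s -> j != i -> ~ P j a.
    by move=> j Hj Hji; apply: Ha; rewrite mem_rem_uniq // inE Hji.
  exists a; split => //.
  apply: NNPP => HPi; apply: Hno; exists a; split => // j Hj'.
  by case: (eqVneq j i) => [->|]; [|apply: Hj].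
case: s Hsz Hu Hs Hno G => [|i0 t] Hsz Hu Hs Hno G.
  by exfalso; apply: Hno; exists 0; split => //; case: HJ.
case: t Hsz Hu Hs Hno G => [|j1 t] Hsz Hu Hs Hno G.
  have [_ [a [Ja Ha]]] := Hs i0 (mem_head _ _).
  by exfalso; apply: Hno; exists a; split => // i; rewrite inE => /eqP ->.
have Hi0 : i0 \notin j1 :: t by move: Hu => /andP [].
have Hpr0 := (Hs i0 (mem_head _ _)).1.
have Q : forall t' : seq I, {subset t' <= j1 :: t} ->
     exists q, ~ P i0 q /\ forall j, j \in t' -> P j q.
  elim=> [|j t' IHt] Hsub.
    by exists 1; split => //; case: Hpr0.
  have [|q [Hq Hqj]] := IHt.
    by move=> k Hk; apply: Hsub; rewrite inE Hk orbT.
  have Hjs : j \in i0 :: j1 :: t by rewrite inE Hsub ?mem_head ?orbT.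
  have [e [Je Pe He]] := G j Hjs.
  have Hji0 : i0 != j.
    by apply/eqP => E; move: Hi0; rewrite E Hsub ?mem_head.
  exists (q * e); split.
    by apply: pr_mul => //; apply: He => //; exact: mem_head.
  move=> k; rewrite inE => /orP [/eqP ->|Hk].
    by apply: id_mull => //; case: (Hs j Hjs) => [[]].
  by apply: id_mulr; [case: (Hs k _) => [|[]] //; rewrite inE Hsub ?orbT // inE Hk orbT|apply: Hqj].
have [q [Hq Hqt]] := Q (j1 :: t) (fun _ h => h).
have Hj1s : j1 \in i0 :: j1 :: t by rewrite !inE eqxx orbT.
have [a1 [Ja1 Pa1 Ha1]] := G j1 Hj1s.
have [a0 [Ja0 Pa0 Ha0]] := G i0 (mem_head _ _).
have Hj1i0 : i0 != j1 by apply/eqP => E; move: Hi0; rewrite E mem_head.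
exfalso; apply: Hno; exists (a0 + q * a1); split.
  by apply: id_add => //; apply: id_mull.
move=> i; rewrite inE => /orP [/eqP ->|Hit] HPa.
  have : P i0 (a0 + q * a1 - a0) by apply: id_sub; case: Hpr0.
  rewrite addrC addKr; apply: pr_mul => //; apply: Ha1 => //; exact: mem_head.
have Hpri : is_prime_ideal (P i) by case: (Hs i _) => //; rewrite inE Hit orbT.
have Hii0 : i != i0 by apply/eqP => E; move: Hi0; rewrite -E Hit.
have : P i (a0 + q * a1 - q * a1).
  by apply: id_sub; case: Hpri => // ? _ _; apply: id_mulr => //; apply: Hqt.
by rewrite addrK; apply: Ha0 => //; rewrite inE Hit orbT.
Qed.

End Aux.

Definition pb (P : Prop) : bool :=
  if ClassicalEpsilon.excluded_middle_informative P then true else false.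

Lemma pbE (P : Prop) : pb P <-> P.
Proof. by rewrite /pb; case: ClassicalEpsilon.excluded_middle_informative. Qed.

Theorem lemma7p1 (B : comPzRingType) (x y : B)
  (Hxy : exists u v : B, u * x + v * y = 1)
  (alpha : B -> Prop) (Halpha : is_ideal alpha)
  (p : nat) (nu : 'I_p -> B -> Prop) (Hnu : forall i, is_prime_ideal (nu i))
  (H : forall a, alpha a -> exists c0 : nat, forall c : nat, (c0 <= c)%N ->
         exists i : 'I_p, nu i (x + a * y ^+ c)) :
  exists i : 'I_p, forall b a : B, alpha a -> nu i (b * x + a).
Proof.
apply: NNPP => Hno.
have Hn : forall i, exists b a, alpha a /\ ~ nu i (b * x + a).
  move=> i; apply: NNPP => Hi; apply: Hno; exists i => b a Ha.
  by apply: NNPP => Hb; apply: Hi; exists b, a.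
have [u [v Huv]] := Hxy.
pose D j := ~ nu j x /\ forall k, nu k x -> exists d, nu j d /\ ~ nu k d.
pose J a := alpha a /\ forall j, D j -> nu j a.
have HJ : is_ideal J.
  split.
  - split; first by case: Halpha.
    by move=> j _; case: (Hnu j) => [[]].
  - move=> a b [Ha Ha'] [Hb Hb']; split; first exact: id_add.
    move=> j Dj; apply: id_add; [by case: (Hnu j)|by apply: Ha'|by apply: Hb'].
  - move=> r a [Ha Ha']; split; first exact: id_mull.
    move=> j Dj; apply: id_mull; [by case: (Hnu j)|by apply: Ha'].
pose s := [seq i <- enum 'I_p | pb (nu i x)].
have Hmem : forall i, i \in s <-> nu i x.
  by move=> i; rewrite mem_filter mem_enum andbT; split => /pbE.
have [||a [Ja Ha]] := PA HJ (n := size s) (s := s) (P := nu) (leqnn _).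
- by rewrite filter_uniq // enum_uniq.
- move=> i /Hmem Hix; split => //.
  have [b0 [a0 [Ha0 Hba0]]] := Hn i.
  have Na0 : ~ nu i a0.
    have HI : is_ideal (nu i) by case: (Hnu i).
    move=> Ha0'; apply: Hba0; apply: id_add => //.
    exact: id_mull.
  have [d [Nd Hd]] : exists d, ~ nu i d /\ forall j, j \in enum 'I_p -> D j -> nu j d.
    elim: (enum 'I_p) => [|j l [d [Nd Hd]]].
      by exists 1; split => //; case: (Hnu i).
    case: (classic (D j)) => Dj.
      have [e [Je Ne]] := Dj.2 i Hix.
      exists (e * d); split; first exact: pr_mul.
      move=> k; rewrite inE => /orP [/eqP -> _|Hk Dk].
        by apply: id_mulr => //; case: (Hnu j).
      by apply: id_mull; [case: (Hnu k)|apply: Hd].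
    exists d; split => // k; rewrite inE => /orP [/eqP -> //|Hk Dk].
    exact: Hd.
  exists (a0 * d); split; last exact: pr_mul.
  split; first by apply: id_mulr.
  by move=> j Dj; apply: id_mull; [case: (Hnu j)|apply: Hd; rewrite ?mem_enum].
have [c0 Hc] := H a Ja.1.
have [i Hi] := Hc c0 (leqnn _).
have caseB : forall k, nu k x -> nu k (x + a * y ^+ c0) -> False.
  move=> k Hkx Hk.
  have : nu k (x + a * y ^+ c0 - x) by apply: id_sub => //; case: (Hnu k).
  rewrite addrC addKr; case: (Hnu k) => _ _ Hpr /Hpr [].
    by apply: Ha; apply/Hmem.
  move=> /(pr_pow (Hnu k)) Hy; case: (Hnu k) => HI N1 _; apply: N1.
  by rewrite -Huv; apply: id_add => //; apply: id_mull.
case: (classic (nu i x)) => Hix; first exact: (caseB i).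
case: (classic (D i)) => Di.
  apply: Hix.
  have : nu i (x + a * y ^+ c0 - a * y ^+ c0).
    apply: id_sub => //; first by case: (Hnu i).
    by apply: id_mulr; [case: (Hnu i)|apply: Ja.2].
  by rewrite addrK.
have [k [Hkx Hsub]] : exists k, nu k x /\ forall d, nu i d -> nu k d.
  apply: NNPP => Hk; apply: Di; split => // k Hkx.
  apply: NNPP => Hd; apply: Hk; exists k; split => // d Hid.
  by apply: NNPP => Hkd; apply: Hd; exists d.
exact: (caseB k Hkx (Hsub _ Hi)).
Qed.
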